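(* Let $d$ be a prime, $n\ge 1$, $0\le k\le n$, and let $L\subset\mathbb{F}_d^{2n}$ be a subspace with $L\subset L^{\perp}$ and $\dim L=n-k$. Fix hyperbolic pairs adapted to $L$, a unit vector $\ket{\overline{0^n}}$, the resulting code subspaces $\mathcal{C}^{(s)}$, coset representatives $\hat{x}(t)$, and the maps $\mathcal{R}^{(s,t)}$, all as described in the context. Then for every $t\in\mathbb{F}_d^{n-k}$ and every trace-preserving completely positive map $\mathcal{A}:\mathcal{B}(\mathcal{H}^{\otimes n})\to\mathcal{B}(\mathcal{H}^{\otimes n})$, $$\frac{1}{d^{n-k}}\sum_{s\in\mathbb{F}_d^{n-k}}F_{\rm e}\big(\pi_{\mathcal{C}^{(s)}},\mathcal{R}^{(s,t)}\mathcal{A}\big)=\sum_{x\in\hat{x}(t)+L}P_{\mathcal{A}}(x),$$ where $P_{\mathcal{A}}(x)=\bra{\Psi_x}[\mathrm{Id}\otimes\mathcal{A}](\ket{\Psi}\bra{\Psi})\ket{\Psi_x}$.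
   Context: $\mathcal{H}$ is a Hilbert space of prime dimension $d$ with orthonormal basis $\ket{0},\dots,\ket{d-1}$ indexed by $\mathbb{F}_d=\mathbb{Z}/d\mathbb{Z}$; $\omega$ is a primitive $d$-th root of unity. Define unitaries $X\ket{a}=\ket{a-1}$, $Z\ket{a}=\omega^a\ket{a}$, and for $(a,b)\in\mathbb{F}_d^2$ put $N_{(a,b)}=i^{ab}X^aZ^b$ if $d=2$ and $N_{(a,b)}=X^aZ^b$ if $d>2$. Identify $((x_1,z_1),\dots,(x_n,z_n))$ with $y=(x_1,z_1,\dots,x_n,z_n)\in\mathbb{F}_d^{2n}$ and set $N_y=N_{(x_1,z_1)}\otimes\cdots\otimes N_{(x_n,z_n)}$. The symplectic form is $\langle y,y'\rangle=\sum_{i=1}^n(x_iz_i'-z_ix_i')$, and $L^{\perp}=\{y:\langle x,y\rangle=0\ \forall x\in L\}$. For $l=(l_1,\dots,l_n)\in\mathbb{F}_d^n$ write $\ket{l}=\ket{l_1}\otimes\cdots\otimes\ket{l_n}$; $\ket{\Psi_y}=d^{-n/2}\sum_{l\in\mathbb{F}_d^n}\ket{l}\otimes N_y\ket{l}$ for $y\in\mathbb{F}_d^{2n}$, and $\ket{\Psi}=\ket{\Psi_{0}}$; $\mathrm{Id}$ is the identity map on $\mathcal{B}(\mathcal{H}^{\otimes n})$. Hyperbolic pairs adapted to $L$: vectors $g_1,\dots,g_n,h_1,\dots,h_n\in\mathbb{F}_d^{2n}$ with $g_1,\dots,g_{n-k}$ a basis of $L$ and $\langle g_i,h_j\rangle=\delta_{ij}$,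 $\langle g_i,g_j\rangle=0$, $\langle h_i,h_j\rangle=0$. Let $\ket{\overline{0^n}}$ be a unit vector with $N_{g_i}\ket{\overline{0^n}}=\ket{\overline{0^n}}$ for all $i$, and $\ket{\overline{l}}=\prod_{i=1}^n(N_{h_i})^{l_i}\ket{\overline{0^n}}$ for $l\in\mathbb{F}_d^n$. For $s\in\mathbb{F}_d^{n-k}$, $\mathcal{C}^{(s)}=\mathrm{span}\{\ket{\overline{(s,u)}}:u\in\mathbb{F}_d^k\}$, $\Pi_s$ is the orthogonal projection onto it, and $\pi_{\mathcal{C}^{(s)}}=\Pi_s/d^k$. For each $t\in\mathbb{F}_d^{n-k}$, $\hat{x}(t)$ is a chosen element of $\{x:\langle g_i,x\rangle=t_i,\ i=1,\dots,n-k\}$. $\mathcal{R}^{(s,t)}$ is $\sigma\mapsto R_t^{(s)}\sigma R_t^{(s)\dagger}$ with $R_t^{(s)}=N_{\hat{x}(t)}^{\dagger}\Pi_{t+s}$. $F_{\rm e}(\rho,\mathcal{E})=\sum_j|\mathrm{tr}(\rho E_j)|^2$ for a completely positive map $\mathcal{E}$ with Kraus operators $E_j$ (unnormalized entanglement fidelity). $\mathcal{M}\mathcal{L}$ denotes composition. *)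

(* Defs.v *)
From HB Require Import structures.
From mathcomp Require Import all_boot all_order all_algebra.
From mathcomp Require Import algC.
From mathcomp Require Import mxtens.
Set Implicit Arguments. Unset Strict Implicit. Unset Printing Implicit Defensive.
Import Order.TTheory GRing.Theory Num.Theory.
Local Open Scope ring_scope.

(* Phase space F_d^{2n}: an n x 2 matrix y, row i = (x_i, z_i). *)
Notation phase d n := 'M['F_d]_(n, 2).
Notation label d n := 'rV['F_d]_n.

Definition symp (d n : nat) (y y' : phase d n) : 'F_d :=
  \sum_(i < n) (y i 0 * y' i 1 - y i 1 * y' i 0).

Definition isotropic (d n : nat) (L : {vspace phase d n}) : Prop :=
  forall x y, x \in L -> y \in L -> symp x y = 0.

Definition dag (m p : nat) (A : 'M[algC]_(m, p)) : 'M[algC]_(p, m) :=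
  (map_mx Num.conj A)^T.

Definition qop (d : nat) (f : 'F_d -> 'F_d -> algC) : 'M[algC]_#|'F_d| :=
  \matrix_(i, j) f (enum_val i) (enum_val j).

Definition Xq (d : nat) : 'M[algC]_#|'F_d| :=
  qop (fun c a : 'F_d => (c == a - 1)%:R).
Definition Zq (d : nat) (w : algC) : 'M[algC]_#|'F_d| :=
  qop (fun c a : 'F_d => (c == a)%:R * w ^+ (val a)).

Definition Nq (d : nat) (w : algC) (a b : 'F_d) : 'M[algC]_#|'F_d| :=
  (if d == 2%N then 'i ^+ (val a * val b) else 1) *:
    ((Xq d) ^+ (val a) * (Zq d w) ^+ (val b)).

(* ---------- n qudits H^{(x)n} = C^{#|F_d^n|}, basis |l> ---------- *)
Notation dimn d n := #|label d n|.
Notation op d n := 'M[algC]_(dimn d n).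
Notation vec d n := 'cV[algC]_(dimn d n).

(* |l> = |l_1> (x) ... (x) |l_n> *)
Definition ket (d n : nat) (l : label d n) : vec d n := delta_mx (enum_rank l) 0.

Definition ntens (d n : nat) (A : 'I_n -> 'M[algC]_#|'F_d|) : op d n :=
  \matrix_(p, q) \prod_(i < n)
     A i (enum_rank ((enum_val p : label d n) 0 i))
         (enum_rank ((enum_val q : label d n) 0 i)).

Definition Nop (d n : nat) (w : algC) (y : phase d n) : op d n :=
  ntens (fun i => Nq w (y i 0) (y i 1)).

Definition Psi (d n : nat) (w : algC) (y : phase d n)
  : 'cV[algC]_(dimn d n * dimn d n) :=
  (sqrtC ((d ^ n)%N%:R))^-1 *:
    \sum_(l : label d n) (ket l *t (Nop w y *m ket l)).

(* A completely positive map, given by a finite list of Kraus operators: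
   sigma |-> sum_j E_j sigma E_j^dagger *)
Definition applyK (m : nat) (Ks : seq 'M[algC]_m) (rho : 'M[algC]_m) : 'M[algC]_m :=
  \sum_(E <- Ks) (E *m rho *m dag E).

Definition trace_preserving (m : nat) (Ks : seq 'M[algC]_m) : Prop :=
  \sum_(E <- Ks) (dag E *m E) = 1%:M.

Definition composeK (m : nat) (Ms Ls : seq 'M[algC]_m) : seq 'M[algC]_m :=
  [seq M *m L | M <- Ms, L <- Ls].

Definition idtensK (m : nat) (Ks : seq 'M[algC]_m) : seq 'M[algC]_(m * m) :=
  [seq (1%:M : 'M[algC]_m) *t E | E <- Ks].

Definition Fe (m : nat) (rho : 'M[algC]_m) (Ks : seq 'M[algC]_m) : algC :=
  \sum_(E <- Ks) `|\tr (rho *m E)| ^+ 2.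

Definition PA (d n : nat) (w : algC) (As : seq (op d n)) (x : phase d n) : algC :=
  (dag (Psi w x) *m
     applyK (idtensK As) (Psi w 0 *m dag (Psi w 0)) *m Psi w x) 0 0.

Definition fst_idx (n k : nat) (i : 'I_(n - k)) : 'I_n := widen_ord (leq_subr k n) i.

Definition ketbar (d n : nat) (w : algC) (h : 'I_n -> phase d n) (v0 : vec d n)
  (l : label d n) : vec d n :=
  (\prod_(i < n) (Nop w (h i)) ^+ (val (l 0 i))) *m v0.

(* the generators |overline{(s,u)}>, u in F_d^k, of C^(s) *)
Definition code_gens (d n k : nat) (w : algC) (h : 'I_n -> phase d n) (v0 : vec d n)
  (s : label d (n - k)) : seq (vec d n) :=
  [seq ketbar w h v0 l |
     l <- enum [pred l : label d n | [forall i : 'I_(n - k), l 0 (@fst_idx n k i) == s 0 i]]].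

Definition orth_proj_onto (m : nat) (P : 'M[algC]_m) (S : seq 'cV[algC]_m) : Prop :=
  (forall v, v \in S -> P *m v = v) /\
  (forall u : 'cV[algC]_m, (forall v, v \in S -> dag u *m v = 0) -> P *m u = 0).

(* Main.v *)
Require Import Defs.
From HB Require Import structures.
From mathcomp Require Import all_boot all_order all_algebra.
From mathcomp Require Import algC.
From mathcomp Require Import mxtens.
Import Order.TTheory GRing.Theory Num.Theory.
Local Open Scope ring_scope.
Set Implicit Arguments. Unset Strict Implicit. Unset Printing Implicit Defensive.

Lemma valFD (d : nat) (Hd : prime d) (x y : 'F_d) : nat_of_ord (x + y) = ((x + y) %% d)%N.
Proof. by rewrite -(val_Fp_nat Hd) natrD !natr_Zp. Qed.
Lemma valFM (d : nat) (Hd : prime d) (x y : 'F_d) : nat_of_ord (x * y) = ((x * y) %% d)%N.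
Proof. by rewrite -(val_Fp_nat Hd) natrM !natr_Zp. Qed.
Lemma valF0 (d : nat) : nat_of_ord (0 : 'F_d) = 0%N.
Proof. by []. Qed.

Definition chi (d : nat) (w : algC) (x : 'F_d) : algC := w ^+ (nat_of_ord x).

Lemma chiD d (w : algC) (Hd : prime d) (Hw : d.-primitive_root w) (x y : 'F_d) :
  chi w (x + y) = chi w x * chi w y.
Proof. by rewrite /chi valFD // expr_mod ?exprD // (prim_expr_order Hw). Qed.

Lemma chi0 d (w : algC) : chi w (0 : 'F_d) = 1.
Proof. by rewrite /chi valF0 expr0. Qed.

Lemma chiNK d (w : algC) (Hd : prime d) (Hw : d.-primitive_root w) (x : 'F_d) :
  chi w (- x) * chi w x = 1.
Proof. by rewrite -chiD // addNr chi0. Qed.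

Lemma normw d (w : algC) (Hd : prime d) (Hw : d.-primitive_root w) : `|w| = 1.
Proof.
have := prim_expr_order Hw => /(congr1 (fun z => `|z|)).
rewrite normrX normr1 => /eqP; rewrite pexpr_eq1 ?prime_gt0 //; by move/eqP.
Qed.

Lemma normchi d (w : algC) (Hd : prime d) (Hw : d.-primitive_root w) (x : 'F_d) : `|chi w x| = 1.
Proof. by rewrite /chi normrX (normw Hd Hw) expr1n. Qed.

Lemma unit_conj (c : algC) : `|c| = 1 -> c^* * c = 1.
Proof. by move=> h; rewrite mulrC -normCK h expr1n. Qed.

Lemma conjchi d (w : algC) (Hd : prime d) (Hw : d.-primitive_root w) (x : 'F_d) :
  (chi w x)^* = chi w (- x).
Proof.
have h1 := unit_conj (normchi Hd Hw x).
have h2 := chiNK Hd Hw x.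
have hx : chi w x != 0 by rewrite -normr_eq0 (normchi Hd Hw) oner_neq0.
by apply: (mulIf hx); rewrite h1 h2.
Qed.

Lemma chi_eq1 d (w : algC) (Hd : prime d) (Hw : d.-primitive_root w) (x : 'F_d) :
  chi w x = 1 -> x = 0.
Proof.
move=> /eqP; rewrite /chi -(prim_order_dvd Hw) => hd.
apply/val_inj => /=.
have hlt : (nat_of_ord x < d)%N by rewrite -(natr_Zp x) (val_Fp_nat Hd) ltn_mod prime_gt0.
case: (nat_of_ord x) hd hlt => // m hd hlt.
by have := dvdn_leq (ltn0Sn m) hd; rewrite leqNgt hlt.
Qed.

Lemma chiX d (w : algC) (Hd : prime d) (Hw : d.-primitive_root w) (x y : 'F_d) :
  chi w x ^+ (nat_of_ord y) = chi w (x * y).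
Proof. by rewrite /chi -exprM valFM // expr_mod // (prim_expr_order Hw). Qed.

Lemma chi_sum d (w : algC) (Hd : prime d) (Hw : d.-primitive_root w) (I : Type) (r : seq I) (P : pred I) (F : I -> 'F_d) :
  chi w (\sum_(i <- r | P i) F i) = \prod_(i <- r | P i) chi w (F i).
Proof. exact: (big_morph (@chi d w) (chiD Hd Hw) (@chi0 d w)). Qed.

Lemma conjM (x y : algC) : (x * y)^* = x^* * y^*.
Proof. exact: rmorphM. Qed.
Lemma conj_sum (I : Type) (r : seq I) (P : pred I) (F : I -> algC) :
  (\sum_(i <- r | P i) F i)^* = \sum_(i <- r | P i) (F i)^*.
Proof. exact: rmorph_sum. Qed.

Definition dot (d m : nat) (a s : 'rV['F_d]_m) : 'F_d := \sum_i a 0 i * s 0 i.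

Lemma dotDr d m (a s t : 'rV['F_d]_m) : dot a (s + t) = dot a s + dot a t.
Proof. by rewrite /dot -big_split; apply: eq_bigr => i _; rewrite mxE mulrDr. Qed.
Lemma dotBl d m (a b s : 'rV['F_d]_m) : dot (a - b) s = dot a s - dot b s.
Proof. by rewrite /dot -sumrB; apply: eq_bigr => i _; rewrite !mxE mulrBl. Qed.
Lemma dot0l d m (s : 'rV['F_d]_m) : dot 0 s = 0.
Proof. by rewrite /dot big1 // => i _; rewrite mxE mul0r. Qed.
Lemma dotC d m (a s : 'rV['F_d]_m) : dot a s = dot s a.
Proof. by rewrite /dot; apply: eq_bigr => i _; rewrite mulrC. Qed.
Lemma dot_delta d m (a : 'rV['F_d]_m) j : dot a (delta_mx 0 j) = a 0 j.
Proof.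
rewrite /dot (bigD1 j) //= big1 ?addr0 => [|i hij]; first by rewrite mxE !eqxx mulr1.
by rewrite mxE (negbTE hij) andbF mulr0.
Qed.

Lemma card_rV d m (Hd : prime d) : #|'rV['F_d]_m| = (d ^ m)%N.
Proof. by rewrite card_mx card_Fp // mul1n. Qed.

Lemma charsum d (w : algC) (Hd : prime d) (Hw : d.-primitive_root w) m (c : 'rV['F_d]_m) :
  \sum_(s : 'rV['F_d]_m) chi w (dot c s) = (c == 0)%:R * (d ^ m)%:R.
Proof.
have [->|hc] := eqVneq c 0.
  under eq_bigr => s _ do rewrite dot0l chi0.
  by rewrite sumr_const card_rV // mul1r.
have [j hj] : exists j, c 0 j != 0.
  apply/existsP; move: hc; apply: contraR; rewrite negb_exists => /forallP h.
  by apply/eqP/rowP => j; rewrite mxE; apply/eqP; move/negPn: (h j).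
rewrite mul0r.
set S := (X in X = 0).
have hS : S = S * chi w (c 0 j).
  rewrite /S {1}(reindex_inj (addIr (delta_mx 0 j))) /= mulr_suml.
  by apply: eq_bigr => s _; rewrite dotDr dot_delta chiD.
have h1 : chi w (c 0 j) != 1 by apply: contra hj => /eqP /(chi_eq1 Hd Hw) ->.
move: hS => /eqP; rewrite eq_sym -subr_eq0 -{2}(mulr1 S) -mulrBr mulf_eq0.
by rewrite subr_eq0 eq_sym (negbTE h1) orbF; move/eqP.
Qed.

Lemma charsum_shift d (w : algC) (Hd : prime d) (Hw : d.-primitive_root w) m (e u : 'rV['F_d]_m) :
  \sum_(s : 'rV['F_d]_m) chi w (dot e (u + s)) = (e == 0)%:R * (d ^ m)%:R.
Proof.
under eq_bigr => s _ do rewrite dotDr chiD //.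
rewrite -mulr_sumr charsum //.
by have [->|] := eqVneq e 0; rewrite ?dot0l ?chi0 ?mul1r ?mul0r ?mulr0.
Qed.

Lemma parseval d (w : algC) (Hd : prime d) (Hw : d.-primitive_root w) m (K : algC)
  (u : 'rV['F_d]_m) (c : 'rV['F_d]_m -> algC) :
  \sum_(s : 'rV['F_d]_m) `|K * \sum_a chi w (- dot a (u + s)) * c a| ^+ 2
  = `|K| ^+ 2 * (d ^ m)%:R * \sum_a `|c a| ^+ 2.
Proof.
under eq_bigr => s _ do rewrite normCK.
under eq_bigr => s _ do rewrite conjM conj_sum mulrACA -normCK mulr_suml.
rewrite -mulr_sumr -mulrA; congr (_ * _).
under eq_bigr => s _ do under eq_bigr => a _ do rewrite mulr_sumr.
rewrite exchange_big /= mulr_sumr; apply: eq_bigr => a _.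
rewrite exchange_big /=.
rewrite (bigD1 a) //= [X in _ + X]big1 ?addr0 => [|b hb].
  under eq_bigr => s _ do rewrite conjM conjchi // opprK mulrACA -chiD // addNr chi0 mul1r.
  rewrite sumr_const card_rV //.
  by rewrite normCK mulr_natl.
under eq_bigr => s _ do rewrite conjM conjchi // opprK mulrACA -chiD // addrC -dotBl.
rewrite -mulr_suml charsum_shift //.
by rewrite subr_eq0 (negbTE hb) !mul0r.
Qed.


From mathcomp Require Import ring.

Lemma conj_nat (n : nat) : (n%:R : algC)^* = n%:R.
Proof. exact: rmorph_nat. Qed.

Lemma dagM m p q (A : 'M[algC]_(m, p)) (B : 'M[algC]_(p, q)) : dag (A *m B) = dag B *m dag A.
Proof. by rewrite /dag map_mxM trmx_mul. Qed.
Lemma dagZ m p (c : algC) (A : 'M[algC]_(m, p)) : dag (c *: A) = c^* *: dag A.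
Proof. by apply/matrixP => i j; rewrite !mxE conjM. Qed.
Lemma dagK m p (A : 'M[algC]_(m, p)) : dag (dag A) = A.
Proof. by apply/matrixP => i j; rewrite !mxE conjCK. Qed.
Lemma dag1 m : dag (1%:M : 'M[algC]_m) = 1%:M.
Proof. by apply/matrixP => i j; rewrite !mxE conj_nat eq_sym. Qed.
Lemma dagD m p (A B : 'M[algC]_(m, p)) : dag (A + B) = dag A + dag B.
Proof. by apply/matrixP => i j; rewrite !mxE rmorphD. Qed.
Lemma dag_sum m p (I : Type) (r : seq I) (P : pred I) (F : I -> 'M[algC]_(m, p)) :
  dag (\sum_(i <- r | P i) F i) = \sum_(i <- r | P i) dag (F i).
Proof.
have h0 : dag (0 : 'M[algC]_(m, p)) = 0 by apply/matrixP => i j; rewrite !mxE rmorph0.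
exact: (big_morph _ (@dagD m p) h0).
Qed.

Lemma sum_enum_val (T : finType) (R : nmodType) (G : T -> R) :
  \sum_(r < #|T|) G (enum_val r) = \sum_(b : T) G b.
Proof. by rewrite (reindex _ (onW_bij _ (enum_val_bij T))). Qed.

Lemma sum_delta (T : finType) (F : T -> algC) (x : T) :
  \sum_(b : T) F b * (b == x)%:R = F x.
Proof.
rewrite (bigD1 x) //= eqxx mulr1 big1 ?addr0 // => b hb.
by rewrite (negbTE hb) mulr0.
Qed.

Lemma qop_mul d (f g : 'F_d -> 'F_d -> algC) :
  qop f *m qop g = qop (fun c e => \sum_b f c b * g b e).
Proof.
apply/matrixP => i j; rewrite !mxE.
rewrite -(sum_enum_val (fun b => f (enum_val i) b * g b (enum_val j))).
by apply: eq_bigr => r _; rewrite !mxE.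
Qed.

Lemma qop_scale d (c : algC) (f : 'F_d -> 'F_d -> algC) :
  c *: qop f = qop (fun x e => c * f x e).
Proof. by apply/matrixP => i j; rewrite !mxE. Qed.

Lemma qop1 d : qop (fun c e : 'F_d => (c == e)%:R) = 1%:M.
Proof. by apply/matrixP => i j; rewrite !mxE (inj_eq enum_val_inj). Qed.

Lemma qop_ext d (f g : 'F_d -> 'F_d -> algC) : (forall c e, f c e = g c e) -> qop f = qop g.
Proof. by move=> h; apply/matrixP => i j; rewrite !mxE h. Qed.

Lemma dag_qop d (f : 'F_d -> 'F_d -> algC) : dag (qop f) = qop (fun c e => (f e c)^*).
Proof. by apply/matrixP => i j; rewrite !mxE. Qed.

Lemma Xpow d j : Xq d ^+ j = qop (fun c e : 'F_d => (c == e - j%:R)%:R).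
Proof.
elim: j => [|j IH]; first by rewrite expr0 -idmxE -qop1; apply: qop_ext => c e; rewrite subr0.
rewrite exprSr IH /Xq -mulmxE qop_mul; apply: qop_ext => c e.
rewrite (eq_bigr (fun b => (c == b - j%:R)%:R * (b == e - 1)%:R)) //.
rewrite sum_delta; congr ((c == _)%:R); rewrite -natr1; ring.
Qed.

Lemma Zpow d (w : algC) j : Zq d w ^+ j = qop (fun c e : 'F_d => (c == e)%:R * w ^+ (j * nat_of_ord e)).
Proof.
elim: j => [|j IH]; first by rewrite expr0 -idmxE -qop1; apply: qop_ext => c e; rewrite mul0n expr0 mulr1.
rewrite exprSr IH /Zq -mulmxE qop_mul; apply: qop_ext => c e.
rewrite (eq_bigr (fun b => ((c == b)%:R * w ^+ (j * nat_of_ord b) * w ^+ nat_of_ord e) * (b == e)%:R)).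
  by rewrite sum_delta -mulrA -exprD mulSn addnC.
by move=> b _; rewrite mulrA mulrAC.
Qed.

Definition Mq d (w : algC) (a b : 'F_d) : 'M[algC]_#|'F_d| :=
  qop (fun c e => (c == e - a)%:R * chi w (b * e)).

Lemma XZ d (w : algC) (Hd : prime d) (Hw : d.-primitive_root w) (a b : 'F_d) :
  (Xq d) ^+ (val a) * (Zq d w) ^+ (val b) = Mq w a b.
Proof.
rewrite Xpow Zpow -mulmxE qop_mul; apply: qop_ext => c e.
rewrite (eq_bigr (fun m => ((c == m - (val a)%:R)%:R * w ^+ (val b * nat_of_ord e)) * (m == e)%:R)).
  by rewrite sum_delta natr_Zp -chiX // /chi exprM.
by move=> m _; rewrite mulrA mulrAC.
Qed.

Lemma MqM d (w : algC) (Hd : prime d) (Hw : d.-primitive_root w) (a b a' b' : 'F_d) :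
  Mq w a b *m Mq w a' b' = chi w (- (b * a')) *: Mq w (a + a') (b + b').
Proof.
rewrite /Mq qop_mul qop_scale; apply: qop_ext => c e.
rewrite (eq_bigr (fun m => ((c == m - a)%:R * chi w (b * m) * chi w (b' * e)) * (m == e - a')%:R)).
  rewrite sum_delta -mulrA [RHS]mulrCA -!chiD //.
  have -> : e - a' - a = e - (a + a') by ring.
  by have -> : b * (e - a') + b' * e = - (b * a') + (b + b') * e by ring.
by move=> m _; rewrite mulrA mulrAC.
Qed.

Lemma Mq00 d (w : algC) : Mq w (0 : 'F_d) 0 = 1%:M.
Proof. by rewrite /Mq -qop1; apply: qop_ext => c e; rewrite subr0 mul0r chi0 mulr1. Qed.


Lemma dagMq d (w : algC) (Hd : prime d) (Hw : d.-primitive_root w) (a b : 'F_d) :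
  dag (Mq w a b) = chi w (- (b * a)) *: Mq w (- a) (- b).
Proof.
rewrite /Mq dag_qop qop_scale; apply: qop_ext => c e.
rewrite conjM conj_nat conjchi // opprK.
have -> : (e == c - a) = (c == e + a) by rewrite eq_sym subr_eq.
case: eqP => [->|]; last by rewrite !mul0r mulr0.
by rewrite !mul1r -chiD //; congr (chi w _); ring.
Qed.

Definition kap d (a b : 'F_d) : algC := if d == 2%N then 'i ^+ (val a * val b) else 1.

Lemma norm_kap d (a b : 'F_d) : `|kap a b| = 1.
Proof. by rewrite /kap; case: (d == 2%N); rewrite ?normrX ?normCi ?expr1n ?normr1. Qed.

Lemma kap_neq0 d (a b : 'F_d) : kap a b != 0.
Proof. by rewrite -normr_eq0 norm_kap oner_neq0. Qed.

Lemma NqE d (w : algC) (Hd : prime d) (Hw : d.-primitive_root w) (a b : 'F_d) :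
  Nq w a b = kap a b *: Mq w a b.
Proof. by rewrite /Nq XZ. Qed.

Definition phiq d (w : algC) (a b a' b' : 'F_d) : algC :=
  kap a b * kap a' b' * chi w (- (b * a')) / kap (a + a') (b + b').

Lemma norm_phiq d (w : algC) (Hd : prime d) (Hw : d.-primitive_root w) (a b a' b' : 'F_d) :
  `|phiq w a b a' b'| = 1.
Proof. by rewrite normrM normrV ?unitfE ?kap_neq0 // !normrM !norm_kap (normchi Hd Hw) !mul1r invr1. Qed.

Lemma NqM' d (w : algC) (Hd : prime d) (Hw : d.-primitive_root w) (a b a' b' : 'F_d) :
  Nq w a b *m Nq w a' b' = phiq w a b a' b' *: Nq w (a + a') (b + b').
Proof.
rewrite !NqE // -scalemxAl -scalemxAr MqM // !scalerA; congr (_ *: _).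
by rewrite /phiq -!mulrA mulVf ?kap_neq0 ?mulr1.
Qed.

Lemma NqM d (w : algC) (Hd : prime d) (Hw : d.-primitive_root w) (a b a' b' : 'F_d) :
  exists2 phi : algC, `|phi| = 1 & Nq w a b *m Nq w a' b' = phi *: Nq w (a + a') (b + b').
Proof.
exists (kap a b * kap a' b' * chi w (- (b * a')) / kap (a + a') (b + b')).
  by rewrite normrM normrV ?unitfE ?kap_neq0 // !normrM !norm_kap (normchi Hd Hw) !mul1r invr1.
rewrite !NqE // -scalemxAl -scalemxAr MqM // !scalerA; congr (_ *: _).
by rewrite -!mulrA mulVf ?kap_neq0 ?mulr1.
Qed.

Lemma Nq_comm d (w : algC) (Hd : prime d) (Hw : d.-primitive_root w) (a b a' b' : 'F_d) :
  Nq w a b *m Nq w a' b' = chi w (a * b' - b * a') *: (Nq w a' b' *m Nq w a b).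
Proof.
rewrite !NqE // -!scalemxAl -!scalemxAr !MqM // !scalerA [a' + a]addrC [b' + b]addrC.
congr (_ *: _).
have -> : chi w (- (b * a')) = chi w (a * b' - b * a') * chi w (- (b' * a)).
  by rewrite -chiD //; congr (chi w _); ring.
ring.
Qed.

Lemma Nq_unit d (w : algC) (Hd : prime d) (Hw : d.-primitive_root w) (a b : 'F_d) :
  dag (Nq w a b) *m Nq w a b = 1%:M.
Proof.
rewrite NqE // dagZ -scalemxAl -scalemxAr dagMq // -scalemxAl MqM // !scalerA addNr.
have e : chi w (- (b * a)) * chi w (- (- b * a)) = 1.
  by rewrite -chiD // (_ : - (b * a) + - (- b * a) = 0) ?chi0 //; ring.
by rewrite addNr Mq00 -mulrA -mulrA e mulr1 unit_conj ?norm_kap // scale1r.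
Qed.

Lemma Nq00 d (w : algC) (Hd : prime d) (Hw : d.-primitive_root w) : Nq w (0 : 'F_d) 0 = 1%:M.
Proof. by rewrite NqE // Mq00 /kap /= muln0 expr0; case: (d == 2%N); rewrite scale1r. Qed.

Lemma conj_prod (I : Type) (r : seq I) (P : pred I) (F : I -> algC) :
  (\prod_(i <- r | P i) F i)^* = \prod_(i <- r | P i) (F i)^*.
Proof. exact: rmorph_prod. Qed.

Lemma eq_ntens d n (A B : 'I_n -> 'M[algC]_#|'F_d|) : (forall i, A i = B i) -> ntens A = ntens B.
Proof. by move=> h; apply/matrixP => p q; rewrite !mxE; apply: eq_bigr => i _; rewrite h. Qed.

Definition rk_of d n (r : 'I_#|label d n|) : {ffun 'I_n -> 'I_#|'F_d|} :=
  [ffun i => enum_rank ((enum_val r : label d n) 0 i)].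
Definition of_rk d n (f : {ffun 'I_n -> 'I_#|'F_d|}) : 'I_#|label d n| :=
  enum_rank (\row_i enum_val (f i) : label d n).

Lemma rk_of_bij d n : bijective (@rk_of d n).
Proof.
exists (@of_rk d n).
  move=> r; rewrite /of_rk /rk_of.
  have -> : (\row_i enum_val ([ffun i => enum_rank ((enum_val r : label d n) 0 i)] i) : label d n) = enum_val r.
    by apply/rowP => i; rewrite !mxE ffunE enum_rankK.
  exact: enum_valK.
move=> f; apply/ffunP => i; rewrite /of_rk /rk_of ffunE enum_rankK mxE.
exact: enum_valK.
Qed.

Lemma ntens_mul d n (A B : 'I_n -> 'M[algC]_#|'F_d|) :
  ntens A *m ntens B = ntens (fun i => A i *m B i).
Proof.
apply/matrixP => p q; rewrite !mxE.
under [RHS]eq_bigr => i _ do rewrite mxE.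
rewrite bigA_distr_bigA /= (reindex _ (onW_bij _ (rk_of_bij d n))) /=.
apply: eq_bigr => r _; rewrite !mxE -big_split /=.
by apply: eq_bigr => i _; rewrite ffunE.
Qed.

Lemma ntens_scale d n (c : 'I_n -> algC) (A : 'I_n -> 'M[algC]_#|'F_d|) :
  ntens (fun i => c i *: A i) = (\prod_i c i) *: ntens A.
Proof. by apply/matrixP => p q; rewrite !mxE -big_split; apply: eq_bigr => i _; rewrite mxE. Qed.

Lemma ntens1 d n : ntens (fun _ : 'I_n => (1%:M : 'M[algC]_#|'F_d|)) = 1%:M.
Proof.
apply/matrixP => p q; rewrite !mxE.
have [<-|hpq] := eqVneq p q.
  by rewrite big1 // => i _; rewrite mxE eqxx.
have [i hi] : exists i, (enum_val p : label d n) 0 i != (enum_val q : label d n) 0 i.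
  apply/existsP; move: hpq; apply: contraR; rewrite negb_exists => /forallP h.
  apply/eqP/enum_val_inj/rowP => j; apply/eqP; move/negPn: (h j); by [].
by rewrite (bigD1 i) //= mxE (inj_eq enum_rank_inj) (negbTE hi) mul0r.
Qed.

Lemma ntens_dag d n (A : 'I_n -> 'M[algC]_#|'F_d|) :
  dag (ntens A) = ntens (fun i => dag (A i)).
Proof. by apply/matrixP => p q; rewrite !mxE conj_prod; apply: eq_bigr => i _; rewrite !mxE. Qed.

Lemma Nop0 d n (w : algC) (Hd : prime d) (Hw : d.-primitive_root w) : Nop w (0 : 'M['F_d]_(n, 2)) = 1%:M.
Proof. by rewrite /Nop -(@ntens1 d n); apply: eq_ntens => i; rewrite !mxE Nq00. Qed.

Lemma NopM d n (w : algC) (Hd : prime d) (Hw : d.-primitive_root w) (y y' : 'M['F_d]_(n, 2)) :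
  exists2 phi : algC, `|phi| = 1 & Nop w y *m Nop w y' = phi *: Nop w (y + y').
Proof.
exists (\prod_i phiq w (y i 0) (y i 1) (y' i 0) (y' i 1)).
  by rewrite normr_prod big1 // => i _; rewrite norm_phiq.
rewrite /Nop ntens_mul -ntens_scale; apply: eq_ntens => i.
by rewrite NqM' // !mxE.
Qed.

Lemma symp_sum d n (y y' : 'M['F_d]_(n, 2)) :
  symp y y' = \sum_i (y i 0 * y' i 1 - y i 1 * y' i 0).
Proof. by []. Qed.

Lemma Nop_comm d n (w : algC) (Hd : prime d) (Hw : d.-primitive_root w) (y y' : 'M['F_d]_(n, 2)) :
  Nop w y *m Nop w y' = chi w (symp y y') *: (Nop w y' *m Nop w y).
Proof.
rewrite /Nop !ntens_mul symp_sum chi_sum // -ntens_scale; apply: eq_ntens => i.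
exact: Nq_comm.
Qed.

Lemma Nop_unit d n (w : algC) (Hd : prime d) (Hw : d.-primitive_root w) (y : 'M['F_d]_(n, 2)) :
  dag (Nop w y) *m Nop w y = 1%:M.
Proof.
rewrite /Nop ntens_dag ntens_mul -(@ntens1 d n); apply: eq_ntens => i.
exact: Nq_unit.
Qed.

Lemma Nop_unit' d n (w : algC) (Hd : prime d) (Hw : d.-primitive_root w) (y : 'M['F_d]_(n, 2)) :
  Nop w y *m dag (Nop w y) = 1%:M.
Proof. exact/mulmx1C/Nop_unit. Qed.

Lemma comm_pow N (A B : 'M[algC]_N) (c : algC) :
  A *m B = c *: (B *m A) -> forall j, A *m (B ^+ j) = c ^+ j *: (B ^+ j *m A).
Proof.
move=> h; elim=> [|j IH]; first by rewrite !expr0 -idmxE mulmx1 mul1mx scale1r.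
by rewrite !exprSr -!mulmxE mulmxA IH -scalemxAl -mulmxA h -scalemxAr scalerA mulmxA.
Qed.

Lemma comm_prod N (I : Type) (r : seq I) (A : 'M[algC]_N) (B : I -> 'M[algC]_N) (c : I -> algC) :
  (forall i, A *m B i = c i *: (B i *m A)) ->
  A *m (\prod_(i <- r) B i) = (\prod_(i <- r) c i) *: ((\prod_(i <- r) B i) *m A).
Proof.
move=> h; elim: r => [|x r IH]; first by rewrite !big_nil -idmxE mulmx1 mul1mx scale1r.
rewrite !big_cons -!mulmxE mulmxA h -scalemxAl -mulmxA IH -scalemxAr scalerA mulmxA.
by rewrite mulrC.
Qed.

Lemma eig_pow N (A : 'M[algC]_N) (v : 'cV[algC]_N) (c : algC) :
  A *m v = c *: v -> forall j, A ^+ j *m v = c ^+ j *: v.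
Proof.
move=> h; elim=> [|j IH]; first by rewrite !expr0 -idmxE mul1mx scale1r.
by rewrite !exprS -mulmxE -mulmxA IH -scalemxAr h scalerA mulrC.
Qed.

Lemma eig_prod N (I : Type) (r : seq I) (B : I -> 'M[algC]_N) (v : 'cV[algC]_N) (c : I -> algC) :
  (forall i, B i *m v = c i *: v) ->
  (\prod_(i <- r) B i) *m v = (\prod_(i <- r) c i) *: v.
Proof.
move=> h; elim: r => [|x r IH]; first by rewrite !big_nil -idmxE mul1mx scale1r.
by rewrite !big_cons -mulmxE -mulmxA IH -scalemxAr h scalerA mulrC.
Qed.

Definition unitary N (A : 'M[algC]_N) := dag A *m A = 1%:M.

Lemma unitary1 N : unitary (1 : 'M[algC]_N).
Proof. by rewrite /unitary -idmxE dag1 mulmx1. Qed.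

Lemma unitaryM N (A B : 'M[algC]_N) : unitary A -> unitary B -> unitary (A * B).
Proof.
rewrite /unitary => hA hB; rewrite -mulmxE dagM mulmxA -(mulmxA (dag B)) hA mulmx1 //.
Qed.

Lemma unitary_pow N (A : 'M[algC]_N) j : unitary A -> unitary (A ^+ j).
Proof.
move=> hA; elim: j => [|j IH]; first by rewrite expr0; apply: unitary1.
by rewrite exprS; apply: unitaryM.
Qed.

Lemma unitary_prod N (I : Type) (r : seq I) (B : I -> 'M[algC]_N) :
  (forall i, unitary (B i)) -> unitary (\prod_(i <- r) B i).
Proof.
move=> h; elim: r => [|x r IH]; first by rewrite big_nil; apply: unitary1.
by rewrite big_cons; apply: unitaryM.
Qed.

Lemma unitaryC N (A : 'M[algC]_N) : unitary A -> A *m dag A = 1%:M.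
Proof. exact: mulmx1C. Qed.

Lemma chiXv d (w : algC) (Hd : prime d) (Hw : d.-primitive_root w) (x y : 'F_d) :
  chi w x ^+ (val y) = chi w (x * y).
Proof. exact: chiX. Qed.

Lemma ket_eig d n (w : algC) (Hd : prime d) (Hw : d.-primitive_root w)
  (g h : 'I_n -> 'M['F_d]_(n, 2))
  (Hgh : forall i j, symp (g i) (h j) = (i == j)%:R)
  (v0 : 'cV[algC]_#|'rV['F_d]_n|)
  (Hv0stab : forall i : 'I_n, Nop w (g i) *m v0 = v0) j (l : 'rV['F_d]_n) :
  Nop w (g j) *m ketbar w h v0 l = chi w (l 0 j) *: ketbar w h v0 l.
Proof.
rewrite /ketbar mulmxA (@comm_prod _ _ _ _ _ (fun i => chi w (symp (g j) (h i)) ^+ val (l 0 i))); last first.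
  by move=> i; apply: comm_pow; apply: Nop_comm.
rewrite -scalemxAl -mulmxA Hv0stab; congr (_ *: _).
under eq_bigr => i _ do rewrite Hgh chiXv //.
rewrite -chi_sum //; congr (chi w _).
rewrite (bigD1 j) //= eqxx mul1r big1 ?addr0 // => i hi.
by rewrite eq_sym (negbTE hi) mul0r.
Qed.

Lemma ket_norm d n (w : algC) (Hd : prime d) (Hw : d.-primitive_root w)
  (h : 'I_n -> 'M['F_d]_(n, 2)) (v0 : 'cV[algC]_#|'rV['F_d]_n|) (l : 'rV['F_d]_n) :
  dag (ketbar w h v0 l) *m ketbar w h v0 l = dag v0 *m v0.
Proof.
have gen : forall P : 'M[algC]_#|'rV['F_d]_n|, unitary P -> dag (P *m v0) *m (P *m v0) = dag v0 *m v0.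
  by move=> P hU; rewrite dagM !mulmxA -(mulmxA _ (dag P)) hU mulmx1.
by apply: gen; apply: unitary_prod => i; apply: unitary_pow; apply: Nop_unit.
Qed.

Lemma ket_orth d n (w : algC) (Hd : prime d) (Hw : d.-primitive_root w)
  (g h : 'I_n -> 'M['F_d]_(n, 2))
  (Hgh : forall i j, symp (g i) (h j) = (i == j)%:R)
  (v0 : 'cV[algC]_#|'rV['F_d]_n|)
  (Hv0stab : forall i : 'I_n, Nop w (g i) *m v0 = v0) (l l' : 'rV['F_d]_n) :
  l != l' -> dag (ketbar w h v0 l) *m ketbar w h v0 l' = 0.
Proof.
move=> hll.
have [j hj] : exists j, l 0 j != l' 0 j.
  apply/existsP; move: hll; apply: contraR; rewrite negb_exists => /forallP hh.
  by apply/eqP/rowP => j; apply/eqP; move/negPn: (hh j).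
set X := dag _ *m _.
have e : X = ((chi w (l 0 j))^* * chi w (l' 0 j)) *: X.
  rewrite {1}/X -[ketbar w h v0 l']mul1mx -(Nop_unit Hd Hw (g j)) -mulmxA mulmxA -dagM.
  by rewrite !(ket_eig Hd Hw Hgh Hv0stab) dagZ -scalemxAl -scalemxAr scalerA.
have hc : (chi w (l 0 j))^* * chi w (l' 0 j) != 1.
  rewrite conjchi // -chiD //; apply: contra hj => /eqP /(chi_eq1 Hd Hw) /eqP.
  by rewrite addrC subr_eq0 eq_sym.
move: e => /eqP; rewrite -subr_eq0 -{1}(scale1r X) -scalerBl scaler_eq0 subr_eq0 eq_sym (negbTE hc).
by move/eqP.
Qed.

Lemma ket_inner d n (w : algC) (Hd : prime d) (Hw : d.-primitive_root w)
  (g h : 'I_n -> 'M['F_d]_(n, 2))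
  (Hgh : forall i j, symp (g i) (h j) = (i == j)%:R)
  (v0 : 'cV[algC]_#|'rV['F_d]_n|)
  (Hv0unit : (dag v0 *m v0) 0 0 = 1)
  (Hv0stab : forall i : 'I_n, Nop w (g i) *m v0 = v0) (l l' : 'rV['F_d]_n) :
  (dag (ketbar w h v0 l) *m ketbar w h v0 l') 0 0 = (l == l')%:R.
Proof.
have [<-|hll] := eqVneq l l'; first by rewrite ket_norm.
by rewrite (ket_orth Hd Hw Hgh Hv0stab hll) mxE.
Qed.

Definition Umx d n (w : algC) (h : 'I_n -> 'M['F_d]_(n, 2)) (v0 : 'cV[algC]_#|'rV['F_d]_n|)
  : 'M[algC]_#|'rV['F_d]_n| :=
  \matrix_(r, c) (ketbar w h v0 (enum_val c)) r 0.

Lemma mulmxU d n (w : algC) (h : 'I_n -> 'M['F_d]_(n, 2)) (v0 : 'cV[algC]_#|'rV['F_d]_n|)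
  m (A : 'M[algC]_(m, #|'rV['F_d]_n|)) i c :
  (A *m Umx w h v0) i c = (A *m ketbar w h v0 (enum_val c)) i 0.
Proof. by rewrite !mxE; apply: eq_bigr => r _; rewrite mxE. Qed.

Lemma Umx_unit d n (w : algC) (Hd : prime d) (Hw : d.-primitive_root w)
  (g h : 'I_n -> 'M['F_d]_(n, 2))
  (Hgh : forall i j, symp (g i) (h j) = (i == j)%:R)
  (v0 : 'cV[algC]_#|'rV['F_d]_n|)
  (Hv0unit : (dag v0 *m v0) 0 0 = 1)
  (Hv0stab : forall i : 'I_n, Nop w (g i) *m v0 = v0) :
  Umx w h v0 *m dag (Umx w h v0) = 1%:M.
Proof.
apply: mulmx1C; apply/matrixP => i j.
rewrite mulmxU.
have -> : (dag (Umx w h v0) *m ketbar w h v0 (enum_val j)) i 0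
          = (dag (ketbar w h v0 (enum_val i)) *m ketbar w h v0 (enum_val j)) 0 0.
  by rewrite !mxE; apply: eq_bigr => r _; rewrite !mxE.
by rewrite (ket_inner Hd Hw Hgh Hv0unit Hv0stab) (inj_eq enum_val_inj) mxE.
Qed.

Lemma basis_ext d n (w : algC) (Hd : prime d) (Hw : d.-primitive_root w)
  (g h : 'I_n -> 'M['F_d]_(n, 2))
  (Hgh : forall i j, symp (g i) (h j) = (i == j)%:R)
  (v0 : 'cV[algC]_#|'rV['F_d]_n|)
  (Hv0unit : (dag v0 *m v0) 0 0 = 1)
  (Hv0stab : forall i : 'I_n, Nop w (g i) *m v0 = v0) (A B : 'M[algC]_#|'rV['F_d]_n|) :
  (forall l, A *m ketbar w h v0 l = B *m ketbar w h v0 l) -> A = B.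
Proof.
move=> hAB.
have e : A *m Umx w h v0 = B *m Umx w h v0 by apply/matrixP => i c; rewrite !mulmxU hAB.
rewrite -(mulmx1 A) -(mulmx1 B) -(Umx_unit Hd Hw Hgh Hv0unit Hv0stab) !mulmxA e //.
Qed.

Definition pre d n k (l : 'rV['F_d]_n) : 'rV['F_d]_(n - k) := \row_i l 0 (@fst_idx n k i).

Lemma mem_code d n k (w : algC) (h : 'I_n -> 'M['F_d]_(n, 2)) (v0 : 'cV[algC]_#|'rV['F_d]_n|)
  (s : 'rV['F_d]_(n - k)) v :
  v \in @code_gens d n k w h v0 s -> exists2 l, pre k l = s & v = ketbar w h v0 l.
Proof.
case/mapP => l; rewrite mem_enum inE => /forallP hl ->; exists l => //.
by apply/rowP => i; rewrite mxE; apply/eqP.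
Qed.

Lemma code_mem d n k (w : algC) (h : 'I_n -> 'M['F_d]_(n, 2)) (v0 : 'cV[algC]_#|'rV['F_d]_n|)
  (l : 'rV['F_d]_n) : ketbar w h v0 l \in @code_gens d n k w h v0 (pre k l).
Proof.
apply/mapP; exists l => //; rewrite mem_enum inE; apply/forallP => i.
by rewrite mxE.
Qed.

Lemma Pi_ket d n k (w : algC) (Hd : prime d) (Hw : d.-primitive_root w)
  (g h : 'I_n -> 'M['F_d]_(n, 2))
  (Hgh : forall i j, symp (g i) (h j) = (i == j)%:R)
  (v0 : 'cV[algC]_#|'rV['F_d]_n|)
  (Hv0stab : forall i : 'I_n, Nop w (g i) *m v0 = v0)
  (s : 'rV['F_d]_(n - k)) (P : 'M[algC]_#|'rV['F_d]_n|)
  (HP : orth_proj_onto P (@code_gens d n k w h v0 s)) (l : 'rV['F_d]_n) :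
  P *m ketbar w h v0 l = (pre k l == s)%:R *: ketbar w h v0 l.
Proof.
case: HP => H1 H2.
have [e|hne] := eqVneq (pre k l) s.
  by rewrite scale1r H1 // -e code_mem.
rewrite scale0r H2 // => v /mem_code [l' hl' ->].
apply: (ket_orth Hd Hw Hgh Hv0stab).
by apply: contra hne => /eqP ->; rewrite hl'.
Qed.

Definition Gop d n k (w : algC) (g : 'I_n -> 'M['F_d]_(n, 2)) (a : 'rV['F_d]_(n - k))
  : 'M[algC]_#|'rV['F_d]_n| :=
  \prod_(i < n - k) Nop w (g (@fst_idx n k i)) ^+ val (a 0 i).

Definition Qop d n k (w : algC) (g : 'I_n -> 'M['F_d]_(n, 2)) (s : 'rV['F_d]_(n - k))
  : 'M[algC]_#|'rV['F_d]_n| :=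
  ((d ^ (n - k))%:R)^-1 *: \sum_(a : 'rV['F_d]_(n - k)) chi w (- dot a s) *: @Gop d n k w g a.

Lemma Q_eig d n k (w : algC) (Hd : prime d) (Hw : d.-primitive_root w)
  (g : 'I_n -> 'M['F_d]_(n, 2)) (s e : 'rV['F_d]_(n - k)) (v : 'cV[algC]_#|'rV['F_d]_n|) :
  (forall i : 'I_(n - k), Nop w (g (@fst_idx n k i)) *m v = chi w (e 0 i) *: v) ->
  @Qop d n k w g s *m v = (e == s)%:R *: v.
Proof.
move=> he.
have hG : forall a, @Gop d n k w g a *m v = chi w (dot e a) *: v.
  move=> a; rewrite /Gop (@eig_prod _ _ _ _ _ (fun i => chi w (e 0 i) ^+ val (a 0 i))).
    by rewrite /dot chi_sum //; congr (_ *: _); apply: eq_bigr => i _; rewrite chiXv.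
  by move=> i; apply: eig_pow.
rewrite /Qop -scalemxAl mulmx_suml.
under eq_bigr => a _ do rewrite -scalemxAl hG scalerA -chiD // dotC addrC -dotBl.
rewrite -scaler_suml charsum // scalerA subr_eq0 mulrCA mulVf ?mulr1 //.
by rewrite pnatr_eq0 expn_eq0 negb_and -lt0n (prime_gt0 Hd).
Qed.

Lemma Pi_Q d n k (w : algC) (Hd : prime d) (Hw : d.-primitive_root w)
  (g h : 'I_n -> 'M['F_d]_(n, 2))
  (Hgh : forall i j, symp (g i) (h j) = (i == j)%:R)
  (v0 : 'cV[algC]_#|'rV['F_d]_n|)
  (Hv0unit : (dag v0 *m v0) 0 0 = 1)
  (Hv0stab : forall i : 'I_n, Nop w (g i) *m v0 = v0)
  (Pi : 'rV['F_d]_(n - k) -> 'M[algC]_#|'rV['F_d]_n|)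
  (HPi : forall s, orth_proj_onto (Pi s) (@code_gens d n k w h v0 s)) s :
  Pi s = @Qop d n k w g s.
Proof.
apply: (basis_ext Hd Hw Hgh Hv0unit Hv0stab) => l.
rewrite (Pi_ket Hd Hw Hgh Hv0stab (HPi s)) (@Q_eig _ _ _ _ Hd Hw g s (pre k l)) // => i.
by rewrite (ket_eig Hd Hw Hgh Hv0stab) mxE.
Qed.

Lemma comm_dag d n (w : algC) (Hd : prime d) (Hw : d.-primitive_root w) (y x : 'M['F_d]_(n, 2)) :
  Nop w y *m dag (Nop w x) = chi w (- symp y x) *: (dag (Nop w x) *m Nop w y).
Proof.
have e : dag (Nop w x) *m Nop w y = chi w (symp y x) *: (Nop w y *m dag (Nop w x)).
  rewrite -[dag (Nop w x) *m Nop w y]mulmx1 -(Nop_unit' Hd Hw x) !mulmxA.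
  rewrite -(mulmxA (dag _)) (Nop_comm Hd Hw) -scalemxAr -scalemxAl; congr (_ *: _).
  by rewrite mulmxA (Nop_unit Hd Hw) mul1mx.
by rewrite e scalerA chiNK // scale1r.
Qed.

Lemma key d n k (w : algC) (Hd : prime d) (Hw : d.-primitive_root w)
  (g h : 'I_n -> 'M['F_d]_(n, 2))
  (Hgh : forall i j, symp (g i) (h j) = (i == j)%:R)
  (v0 : 'cV[algC]_#|'rV['F_d]_n|)
  (Hv0unit : (dag v0 *m v0) 0 0 = 1)
  (Hv0stab : forall i : 'I_n, Nop w (g i) *m v0 = v0)
  (Pi : 'rV['F_d]_(n - k) -> 'M[algC]_#|'rV['F_d]_n|)
  (HPi : forall s, orth_proj_onto (Pi s) (@code_gens d n k w h v0 s))
  (xh : 'M['F_d]_(n, 2)) (t : 'rV['F_d]_(n - k))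
  (Hxh : forall i : 'I_(n - k), symp (g (@fst_idx n k i)) xh = t 0 i) s :
  Pi s *m (dag (Nop w xh) *m Pi (t + s)) = dag (Nop w xh) *m @Qop d n k w g (t + s).
Proof.
apply: (basis_ext Hd Hw Hgh Hv0unit Hv0stab) => l.
rewrite -!mulmxA (Pi_ket Hd Hw Hgh Hv0stab (HPi (t + s))).
rewrite (@Q_eig _ _ _ _ Hd Hw g (t + s) (pre k l)); last first.
  by move=> i; rewrite (ket_eig Hd Hw Hgh Hv0stab) mxE.
have [e|hne] := eqVneq (pre k l) (t + s); last by rewrite !scale0r !mulmx0.
rewrite !scale1r (Pi_Q Hd Hw Hgh Hv0unit Hv0stab HPi).
rewrite (@Q_eig _ _ _ _ Hd Hw g s s) ?eqxx ?scale1r // => i.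
rewrite mulmxA comm_dag // -scalemxAl -mulmxA (ket_eig Hd Hw Hgh Hv0stab) -scalemxAr scalerA -chiD // Hxh.
have := congr1 (fun r : 'rV['F_d]_(n - k) => r 0 i) e; rewrite !mxE => ->.
by rewrite addKr.
Qed.

Definition PL d n (w : algC) (M : 'M[algC]_#|'rV['F_d]_n|) (y : 'M['F_d]_(n, 2)) :=
  exists2 phi : algC, `|phi| = 1 & M = phi *: Nop w y.

Lemma PL1 d n (w : algC) (Hd : prime d) (Hw : d.-primitive_root w) : @PL d n w 1 0.
Proof. by exists 1; rewrite ?normr1 // scale1r Nop0 // idmxE. Qed.

Lemma PLM d n (w : algC) (Hd : prime d) (Hw : d.-primitive_root w) A B (y y' : 'M['F_d]_(n, 2)) :
  PL w A y -> PL w B y' -> PL w (A * B) (y + y').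
Proof.
move=> [p hp ->] [p' hp' ->]; have [q hq e] := NopM Hd Hw y y'.
exists (p * p' * q); first by rewrite !normrM hp hp' hq !mul1r.
by rewrite -mulmxE -scalemxAl -scalemxAr e !scalerA.
Qed.

Lemma PL_pow d n (w : algC) (Hd : prime d) (Hw : d.-primitive_root w) A (y : 'M['F_d]_(n, 2)) j :
  PL w A y -> PL w (A ^+ j) (y *+ j).
Proof.
move=> hA; elim: j => [|j IH]; first by rewrite expr0 mulr0n; apply: PL1.
by rewrite exprS mulrS; apply: PLM.
Qed.

Lemma PL_prod d n (w : algC) (Hd : prime d) (Hw : d.-primitive_root w) (I : Type) (r : seq I)
  (B : I -> 'M[algC]_#|'rV['F_d]_n|) (y : I -> 'M['F_d]_(n, 2)) :
  (forall i, PL w (B i) (y i)) -> PL w (\prod_(i <- r) B i) (\sum_(i <- r) y i).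
Proof.
move=> h; elim: r => [|x r IH]; first by rewrite !big_nil; apply: PL1.
by rewrite !big_cons; apply: PLM.
Qed.

Definition zvec d n k (g : 'I_n -> 'M['F_d]_(n, 2)) (a : 'rV['F_d]_(n - k)) : 'M['F_d]_(n, 2) :=
  \sum_i a 0 i *: g (@fst_idx n k i).

Lemma G_PL d n k (w : algC) (Hd : prime d) (Hw : d.-primitive_root w)
  (g : 'I_n -> 'M['F_d]_(n, 2)) (a : 'rV['F_d]_(n - k)) :
  PL w (@Gop d n k w g a) (zvec g a).
Proof.
apply: (PL_prod Hd Hw) => i.
have -> : a 0 i *: g (@fst_idx n k i) = g (@fst_idx n k i) *+ val (a 0 i) by rewrite -scaler_nat natr_Zp.
apply: (PL_pow Hd Hw); exists 1; by rewrite ?normr1 ?scale1r.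
Qed.

Lemma dagN_Nop d n (w : algC) (Hd : prime d) (Hw : d.-primitive_root w) (x z : 'M['F_d]_(n, 2)) :
  exists2 psi : algC, `|psi| = 1 & dag (Nop w x) *m Nop w z = psi *: dag (Nop w (x - z)).
Proof.
have [p hp e] := NopM Hd Hw z (x - z).
have ez : z + (x - z) = x by rewrite addrC subrK.
rewrite ez in e.
exists p => //.
have e2 : dag (Nop w (x - z)) = p^* *: (dag (Nop w x) *m Nop w z).
  rewrite -[dag (Nop w (x - z))]mulmx1 -(Nop_unit Hd Hw z) mulmxA -dagM e dagZ.
  by rewrite scalemxAl.
by rewrite e2 scalerA mulrC unit_conj // scale1r.
Qed.

Lemma norm_c d n k (w : algC) (Hd : prime d) (Hw : d.-primitive_root w)
  (g : 'I_n -> 'M['F_d]_(n, 2)) (x : 'M['F_d]_(n, 2)) (a : 'rV['F_d]_(n - k)) (E : 'M[algC]_#|'rV['F_d]_n|) :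
  `|\tr (dag (Nop w x) *m @Gop d n k w g a *m E)| = `|\tr (dag (Nop w (x - zvec g a)) *m E)|.
Proof.
have [p hp ->] := G_PL Hd Hw g a.
have [q hq e] := dagN_Nop Hd Hw x (zvec g a).
by rewrite -scalemxAr e -scalemxAl -scalemxAl mxtraceZ mxtraceZ !normrM hp hq !mul1r.
Qed.

Lemma dag_tens m1 n1 m2 n2 (A : 'M[algC]_(m1, n1)) (B : 'M[algC]_(m2, n2)) :
  dag (A *t B) = dag A *t dag B.
Proof. by rewrite /dag map_mxT trmx_tens. Qed.

Lemma dag_tens_cV m1 m2 (A : 'cV[algC]_m1) (B : 'cV[algC]_m2) :
  dag (A *t B : 'cV[algC]_(m1 * m2)) = (dag A *t dag B : 'rV[algC]_(m1 * m2)).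
Proof. exact (dag_tens A B). Qed.
Lemma tmul_r m1 m2 r1 r2 (A : 'rV[algC]_m1) (B : 'rV[algC]_m2) (C : 'M[algC]_(m1, r1)) (D : 'M[algC]_(m2, r2)) :
  (A *t B : 'rV[algC]_(m1 * m2)) *m (C *t D) = ((A *m C) *t (B *m D) : 'rV[algC]_(r1 * r2)).
Proof. exact (tensmx_mul A B C D). Qed.
Lemma tmul_c r1 r2 (A : 'rV[algC]_r1) (B : 'rV[algC]_r2) (C : 'cV[algC]_r1) (D : 'cV[algC]_r2) :
  (A *t B : 'rV[algC]_(r1 * r2)) *m (C *t D : 'cV[algC]_(r1 * r2)) = ((A *m C) *t (B *m D) : 'M[algC]_1).
Proof. exact (tensmx_mul A B C D). Qed.

Lemma tens11 (A B : 'M[algC]_1) : (A *t B : 'M[algC]_1) 0 0 = A 0 0 * B 0 0.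
Proof.
rewrite mxE; set a := (mxtens_unindex _).1; set b := (mxtens_unindex _).2.
by rewrite [a]ord1 [b]ord1.
Qed.

Lemma dag_delta N (i : 'I_N) : dag (delta_mx i 0 : 'cV[algC]_N) = delta_mx 0 i.
Proof. by apply/matrixP => a b; rewrite !mxE conj_nat andbC. Qed.

Lemma delta_sand N (M : 'M[algC]_N) (i j : 'I_N) : ((delta_mx 0 i : 'rV[algC]_N) *m M *m (delta_mx j 0 : 'cV[algC]_N)) 0 0 = M i j.
Proof. by rewrite -rowE -colE !mxE. Qed.

Lemma delta_inner N (i j : 'I_N) : ((delta_mx 0 i : 'rV[algC]_N) *m (delta_mx j 0 : 'cV[algC]_N)) 0 0 = (i == j)%:R.
Proof. by rewrite mul_delta_mx_cond mulmxnE mxE !eqxx. Qed.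

Lemma alpha_eq d n (w : algC) (Hd : prime d) (Hw : d.-primitive_root w) (x : 'M['F_d]_(n, 2))
  (E : 'M[algC]_#|'rV['F_d]_n|) :
  (dag (Psi w x) *m ((1%:M : 'M[algC]_#|'rV['F_d]_n|) *t E) *m Psi w 0) 0 0
  = ((d ^ n)%:R)^-1 * \tr (dag (Nop w x) *m E).
Proof.
rewrite /Psi Nop0 // dagZ dag_sum -scalemxAl -scalemxAr -!scalemxAl mxE.
set sg := (sqrtC _)^-1.
have sg0 : 0 <= sg by rewrite invr_ge0 sqrtC_ge0 ler0n.
have e : sg^* * sg = ((d ^ n)%:R)^-1.
  by rewrite geC0_conj // -expr2 exprVn sqrtCK.
rewrite mxE mulrA (mulrC sg) e; congr (_ * _).
rewrite !mulmx_suml summxE.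
have -> : \tr (dag (Nop w x) *m E) = \sum_(l : 'rV['F_d]_n) (dag (Nop w x) *m E) (enum_rank l) (enum_rank l).
  rewrite -(sum_enum_val (fun l : 'rV['F_d]_n => (dag (Nop w x) *m E) (enum_rank l) (enum_rank l))).
  by apply: eq_bigr => r _; rewrite enum_valK.
apply: eq_bigr => i _.
rewrite mulmx_sumr summxE.
under eq_bigr => l _ do rewrite dag_tens_cV tmul_r tmul_c tens11 mulmx1 !mul1mx /ket dagM !dag_delta delta_inner -(mulmxA _ (dag _)) delta_sand (inj_eq enum_rank_inj) mulrC eq_sym.
by rewrite sum_delta.
Qed.

Lemma mx11_dag (a : 'M[algC]_1) : (a *m dag a) 0 0 = a 0 0 * (a 0 0)^*.
Proof. by rewrite mxE big_ord1 !mxE. Qed.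

Lemma PA_eq d n (w : algC) (As : seq 'M[algC]_#|'rV['F_d]_n|) (x : 'M['F_d]_(n, 2)) :
  PA w As x = \sum_(E <- As)
    `|(dag (Psi w x) *m ((1%:M : 'M[algC]_#|'rV['F_d]_n|) *t E) *m Psi w 0) 0 0| ^+ 2.
Proof.
rewrite /PA /applyK /idtensK big_map mulmx_sumr mulmx_suml summxE; apply: eq_bigr => E _.
set T := (1%:M : 'M[algC]_#|'rV['F_d]_n|) *t E.
set a := dag (Psi w x) *m T *m Psi w 0.
have -> : dag (Psi w x) *m (T *m (Psi w 0 *m dag (Psi w 0)) *m dag T) *m Psi w x = a *m dag a.
  by rewrite /a !dagM dagK !mulmxA.
by rewrite normCK mx11_dag.
Qed.

Lemma sumL d n k (L : {vspace 'M['F_d]_(n, 2)}) (g : 'I_n -> 'M['F_d]_(n, 2))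
  (Hbasis : basis_of L [seq g (@fst_idx n k i) | i <- enum 'I_(n - k)])
  (xh : 'M['F_d]_(n, 2)) (F : 'M['F_d]_(n, 2) -> algC) :
  \sum_(x | x - xh \in L) F x = \sum_(a : 'rV['F_d]_(n - k)) F (xh - zvec g a).
Proof.
set T := [tuple g (@fst_idx n k i) | i < n - k].
have eT : [seq g (@fst_idx n k i) | i <- enum 'I_(n - k)] = val T by [].
move: Hbasis; rewrite eT /basis_of => /andP [/eqP hspan hfree].
have hnth : forall i : 'I_(n - k), T`_i = g (@fst_idx n k i) by move=> i; rewrite nth_mktuple.
have zE : forall a : 'rV['F_d]_(n - k), zvec g a = \sum_i a 0 i *: T`_i.
  by move=> a; rewrite /zvec; apply: eq_bigr => i _; rewrite hnth.
have inj : injective (fun a : 'rV['F_d]_(n - k) => xh - zvec g a).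
  move=> a b /= /eqP; rewrite -subr_eq0 opprB addrC addrA addrNK subr_eq0 => /eqP e.
  have h0 : \sum_(i < n - k) (a 0 i - b 0 i) *: T`_i = 0.
    under eq_bigr => i _ do rewrite scalerBl.
    by rewrite sumrB -!zE e subrr.
  move/freeP: hfree => /(_ _ h0) hab.
  by apply/rowP => i; apply/eqP; rewrite -subr_eq0 hab.
rewrite -[RHS](big_imset _ (in2W inj)) /=.
apply: eq_bigl => x; apply/idP/imsetP.
  move=> hx; exists (\row_i - coord T i (x - xh)) => //.
  rewrite -hspan in hx; have e := coord_span hx.
  rewrite zE; under eq_bigr => i _ do rewrite mxE scaleNr.
  by rewrite sumrN -e opprK addrC subrK.
case=> a _ ->; rewrite addrAC subrr add0r memvN.
rewrite zE; apply: memv_suml => i _; apply: memvZ; rewrite -hspan.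
by apply: memv_span; apply: mem_nth; rewrite size_tuple.
Qed.

Lemma term_eq d n k (w : algC) (Hd : prime d) (Hw : d.-primitive_root w)
  (g h : 'I_n -> 'M['F_d]_(n, 2))
  (Hgh : forall i j, symp (g i) (h j) = (i == j)%:R)
  (v0 : 'cV[algC]_#|'rV['F_d]_n|)
  (Hv0unit : (dag v0 *m v0) 0 0 = 1)
  (Hv0stab : forall i : 'I_n, Nop w (g i) *m v0 = v0)
  (Pi : 'rV['F_d]_(n - k) -> 'M[algC]_#|'rV['F_d]_n|)
  (HPi : forall s, orth_proj_onto (Pi s) (@code_gens d n k w h v0 s))
  (xh : 'M['F_d]_(n, 2)) (t : 'rV['F_d]_(n - k))
  (Hxh : forall i : 'I_(n - k), symp (g (@fst_idx n k i)) xh = t 0 i) s E :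
  \tr (((d ^ k)%N%:R)^-1 *: Pi s *m (dag (Nop w xh) *m Pi (t + s) *m E))
  = (((d ^ k)%N%:R)^-1 * ((d ^ (n - k))%N%:R)^-1) *
      \sum_(a : 'rV['F_d]_(n - k)) chi w (- dot a (t + s)) * \tr (dag (Nop w xh) *m @Gop d n k w g a *m E).
Proof.
rewrite -scalemxAl linearZ /= mulmxA (key Hd Hw Hgh Hv0unit Hv0stab HPi Hxh) -mulrA; congr (_ * _).
rewrite /Qop -scalemxAr -scalemxAl linearZ /=; congr (_ * _).
rewrite mulmx_sumr mulmx_suml linear_sum; apply: eq_bigr => a _.
by rewrite -scalemxAr -scalemxAl linearZ /=.
Qed.

Lemma Fe_comp m (rho R : 'M[algC]_m) (As : seq 'M[algC]_m) :
  Fe rho (composeK [:: R] As) = \sum_(E <- As) `|\tr (rho *m (R *m E))| ^+ 2.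
Proof. by rewrite /Fe /composeK /= cats0 big_map. Qed.

Unset Implicit Arguments.

Theorem theorem1 (d n k : nat) (w : algC)
  (Hd : prime d) (Hn : (1 <= n)%N) (Hk : (k <= n)%N)
  (Hw : d.-primitive_root w)
  (L : {vspace 'M['F_d]_(n, 2)})
  (HLiso : isotropic L) (HLdim : \dim L = (n - k)%N)
  (g h : 'I_n -> 'M['F_d]_(n, 2))
  (Hbasis : basis_of L [seq g (@fst_idx n k i) | i <- enum 'I_(n - k)])
  (Hgh : forall i j, symp (g i) (h j) = (i == j)%:R)
  (Hgg : forall i j, symp (g i) (g j) = 0)
  (Hhh : forall i j, symp (h i) (h j) = 0)
  (v0 : 'cV[algC]_#|'rV['F_d]_n|)
  (Hv0unit : (dag v0 *m v0) 0 0 = 1)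
  (Hv0stab : forall i : 'I_n, Nop w (g i) *m v0 = v0)
  (Pi : 'rV['F_d]_(n - k) -> 'M[algC]_#|'rV['F_d]_n|)
  (HPi : forall s, orth_proj_onto (Pi s) (@code_gens d n k w h v0 s))
  (xhat : 'rV['F_d]_(n - k) -> 'M['F_d]_(n, 2))
  (Hxhat : forall t (i : 'I_(n - k)), symp (g (@fst_idx n k i)) (xhat t) = t 0 i) :
  forall (t : 'rV['F_d]_(n - k)) (As : seq 'M[algC]_#|'rV['F_d]_n|),
    trace_preserving As ->
    ((d ^ (n - k))%N%:R)^-1 *
      \sum_(s : 'rV['F_d]_(n - k))
        Fe ((d ^ k)%N%:R^-1 *: Pi s)
           (composeK [:: dag (Nop w (xhat t)) *m Pi (t + s)] As)
    = \sum_(x : 'M['F_d]_(n, 2) | x - xhat t \in L) PA w As x.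
Proof.
move=> t As _.
under eq_bigr => s _ do rewrite Fe_comp.
under eq_bigr => s _ do under eq_bigr => E _ do rewrite (term_eq Hd Hw Hgh Hv0unit Hv0stab HPi (Hxhat t)).
rewrite exchange_big /=.
under eq_bigr => E _ do rewrite parseval //.
under [RHS]eq_bigr => x _ do rewrite PA_eq.
under [RHS]eq_bigr => x _ do under eq_bigr => E _ do rewrite alpha_eq //.
rewrite exchange_big /= mulr_sumr; apply: eq_bigr => E _.
rewrite (sumL Hbasis (xhat t) (fun x => `|(d ^ n)%:R^-1 * \tr (dag (Nop w x) *m E)| ^+ 2)).

under [RHS]eq_bigr => a _ do rewrite normrM exprMn -(norm_c Hd Hw).
have dm0 : ((d ^ (n - k))%N%:R : algC) != 0.
  by rewrite pnatr_eq0 expn_eq0 negb_and -lt0n (prime_gt0 Hd).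
rewrite -mulr_sumr mulrCA -mulrA mulVKf //; congr (`|_| ^+ 2 * _).
by rewrite -invfM -natrM -expnD subnKC.
Qed.
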